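(* Let $m\ge1$, $\boldsymbol\gamma=(\gamma_1,\ldots,\gamma_m)\in\mathbb{N}^m$, and let $f_1,\ldots,f_{m+1}$ be multiplicative arithmetic functions. Then the function $S^{\boldsymbol\gamma}_{f_1,\ldots,f_{m+1}}$ of $m+1$ variables is multiplicative.
   Context: An arithmetic function is a map $f:\mathbb{N}\to\mathbb{C}$, with $f(x)=0$ for $x\notin\mathbb{N}$. It is multiplicative if $f(ab)=f(a)f(b)$ whenever $\gcd(a,b)=1$. The multiple Ramanujan sum is \[ S^{\boldsymbol\gamma}_{f_1,\ldots,f_{m+1}}(n_1,\ldots,n_{m+1}):=\sum_{\substack{(d_1,\ldots,d_m)\in\mathbb{N}^m\\ d_j^{\gamma_j}\mid\gcd(n_1,\ldots,n_{j+1})\ (1\le j\le m)}} f_1\Bigl(\frac{n_1}{d_1^{\gamma_1}}\Bigr)f_2\Bigl(\frac{d_1^{\gamma_1}}{d_2^{\gamma_2}}\Bigr)\cdots f_m\Bigl(\frac{d_{m-1}^{\gamma_{m-1}}}{d_m^{\gamma_m}}\Bigr)f_{m+1}\bigl(d_m^{\gamma_m}\bigr). \] A function $F:\mathbb{N}^k\to\mathbb{C}$ is called multiplicative if $F(m_1n_1,\ldots,m_kn_k)=F(m_1,\ldots,m_k)F(n_1,\ldots,n_k)$ for all $(m_1,\ldots,m_k),(n_1,\ldots,n_k)\in\mathbb{N}^k$ that are relatively prime, i.e. $\gcd(m_1\cdots m_k,\,n_1\cdots n_k)=1$. *)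

(* Defs.v *)
From mathcomp Require Import all_boot all_algebra.
From mathcomp Require Import complex reals.
Set Implicit Arguments. Unset Strict Implicit. Unset Printing Implicit Defensive.
Import GRing.Theory.
Local Open Scope ring_scope.

Definition multiplicative_fun (C : ringType) (f : nat -> C) : Prop :=
  forall a b : nat, (0 < a)%N -> (0 < b)%N -> coprime a b -> f (a * b)%N = f a * f b.

(* f evaluated at a / b, with the convention f(x) = 0 for x not in N *)
Definition fquot (C : ringType) (f : nat -> C) (a b : nat) : C :=
  if [&& (0 < a)%N, (0 < b)%N & (b %| a)%N] then f (a %/ b)%N else 0.

(* multiple Ramanujan sum S^gamma_{f_1..f_{m+1}}(n_1..n_{m+1}), 0-indexed:
   f k = f_{k+1}, n i = n_{i+1}, gam j = gamma_{j+1}, d j = d_{j+1}.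
   Since d_j <= d_j^{gamma_j} <= n_1 (for positive arguments), the
   range d_j in {0..n_1} is exhaustive. *)
Definition mramanujan (C : ringType) (m : nat) (gam : 'I_m -> nat)
  (f : 'I_m.+1 -> nat -> C) (n : 'I_m.+1 -> nat) : C :=
  \sum_(d : {ffun 'I_m -> 'I_(n ord0).+1} |
          [forall j : 'I_m, (0 < d j)%N &&
             ((d j : nat) ^ gam j %| \big[gcdn/0%N]_(i < m.+1 | (i <= j.+1)%N) n i)%N])
    let ds := [seq ((d j : nat) ^ gam j)%N | j <- enum 'I_m] in
    let D := fun k : nat => if k == 0%N then n ord0 else nth 1%N ds k.-1 in
    \prod_(k < m.+1) fquot (f k) (D k) (D k.+1).

Definition multiplicative_k (C : ringType) (k : nat) (F : ('I_k -> nat) -> C) : Prop :=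
  forall a b : 'I_k -> nat,
    (forall i, 0 < a i)%N -> (forall i, 0 < b i)%N ->
    coprime (\prod_(i < k) a i) (\prod_(i < k) b i) ->
    F (fun i => (a i * b i)%N) = F a * F b.

(* Main.v *)
Require Import Defs.
From mathcomp Require Import all_boot all_algebra.
From mathcomp Require Import complex reals.
Import GRing.Theory.
Local Open Scope ring_scope.

Lemma L1 (x y A B : nat) : (x %| A)%N -> (y %| B)%N -> coprime A B ->
  gcdn (x * y) A = x.
Proof.
move=> xA yB cAB; apply/eqP; rewrite eqn_dvd; apply/andP; split.
  have cgy : coprime (gcdn (x * y) A) y.
    apply: (coprime_dvdl (dvdn_gcdr _ _)).
    by rewrite coprime_sym; apply: (coprime_dvdl yB); rewrite coprime_sym.
  by rewrite -(Gauss_dvdl _ cgy) dvdn_gcdl.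
by rewrite dvdn_gcd xA dvdn_mulr.
Qed.

Lemma L2 (d A B : nat) : (d %| A * B)%N -> coprime A B ->
  (gcdn d A * gcdn d B)%N = d.
Proof.
move=> dAB cAB; apply/eqP; rewrite eqn_dvd; apply/andP; split.
  rewrite Gauss_dvd ?dvdn_gcdl ?dvdn_gcdl //.
  apply: (coprime_dvdl (dvdn_gcdr _ _)).
  by rewrite coprime_sym; apply: (coprime_dvdl (dvdn_gcdr _ _)); rewrite coprime_sym.
have h1 : (d %| gcdn d A * B)%N.
  by rewrite muln_gcdl dvdn_gcd dvdn_mulr.
have h2 : (d %| gcdn d A * d)%N by rewrite dvdn_mull.
have := dvdn_gcd d (gcdn d A * B) (gcdn d A * d).
by rewrite h1 h2 -muln_gcdr (gcdnC B d) => ->.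
Qed.

Lemma fquot_mul (C : comNzRingType) (f : nat -> C) (u1 v1 u2 v2 A B : nat) :
  multiplicative_fun f -> (0 < A)%N -> (0 < B)%N -> coprime A B ->
  (u1 %| A)%N -> (v1 %| A)%N -> (u2 %| B)%N -> (v2 %| B)%N ->
  fquot f (u1 * u2) (v1 * v2) = fquot f u1 v1 * fquot f u2 v2.
Proof.
move=> fm A0 B0 cAB u1A v1A u2B v2B.
have pos : forall x y, (0 < y)%N -> (x %| y)%N -> (0 < x)%N.
  move=> x y y0 /dvdnP [q e]; by move: y0; rewrite e muln_gt0 => /andP [].
have u10 := pos _ _ A0 u1A; have v10 := pos _ _ A0 v1A.
have u20 := pos _ _ B0 u2B; have v20 := pos _ _ B0 v2B.
have cu1v2 : coprime v1 u2.
  by apply: (coprime_dvdl v1A); rewrite coprime_sym; apply: (coprime_dvdl u2B); rewrite coprime_sym.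
have cv2u1 : coprime v2 u1.
  by apply: (coprime_dvdl v2B); rewrite coprime_sym; apply: (coprime_dvdl u1A).
rewrite /fquot !muln_gt0 u10 u20 v10 v20 /=.
case: (boolP (v1 %| u1)%N) => d1; case: (boolP (v2 %| u2)%N) => d2 /=.
- have -> : (v1 * v2 %| u1 * u2)%N by apply: dvdn_mul.
  move: d1 d2 => /dvdnP [q1 e1] /dvdnP [q2 e2].
  have -> : (u1 * u2 %/ (v1 * v2) = q1 * q2)%N.
    by rewrite e1 e2 mulnACA mulnK // muln_gt0 v10 v20.
  rewrite e1 e2 !mulnK //; apply: fm.
  + by move: u10; rewrite e1 muln_gt0 => /andP [].
  + by move: u20; rewrite e2 muln_gt0 => /andP [].
  apply: (coprime_dvdl (m := q1) (n := A)).
    by apply: dvdn_trans u1A; rewrite e1 dvdn_mulr.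
  rewrite coprime_sym; apply: (coprime_dvdl (n := B)); last by rewrite coprime_sym.
  by apply: dvdn_trans u2B; rewrite e2 dvdn_mulr.
- have -> : (v1 * v2 %| u1 * u2)%N = false.
    apply/negP => h; move/negP: d2; apply.
    have : (v2 %| u1 * u2)%N by apply: dvdn_trans h; apply: dvdn_mull.
    by rewrite Gauss_dvdr.
  by rewrite mulr0.
- have -> : (v1 * v2 %| u1 * u2)%N = false.
    apply/negP => h; move/negP: d1; apply.
    have : (v1 %| u1 * u2)%N by apply: dvdn_trans h; apply: dvdn_mulr.
    by rewrite Gauss_dvdl.
  by rewrite mul0r.
- have -> : (v1 * v2 %| u1 * u2)%N = false.
    apply/negP => h; move/negP: d1; apply.
    have : (v1 %| u1 * u2)%N by apply: dvdn_trans h; apply: dvdn_mulr.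
    by rewrite Gauss_dvdl.
  by rewrite mul0r.
Qed.

Lemma term_mul (C : comNzRingType) m (f : 'I_m.+1 -> nat -> C) (D D1 D2 : nat -> nat) A B :
  (forall k, multiplicative_fun (f k)) -> (0 < A)%N -> (0 < B)%N -> coprime A B ->
  (forall k, D k = D1 k * D2 k)%N -> (forall k, D1 k %| A)%N -> (forall k, D2 k %| B)%N ->
  \prod_(k < m.+1) fquot (f k) (D k) (D k.+1) =
  (\prod_(k < m.+1) fquot (f k) (D1 k) (D1 k.+1)) * (\prod_(k < m.+1) fquot (f k) (D2 k) (D2 k.+1)).
Proof.
move=> fm A0 B0 cAB HD H1 H2; rewrite -big_split; apply: eq_bigr => k _.
by rewrite !HD (@fquot_mul C (f k) _ _ _ _ A B (fm k) A0 B0 cAB (H1 _) (H1 _) (H2 _) (H2 _)).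
Qed.

Lemma nth_mapmul m (gam : 'I_m -> nat) (e e1 e2 : 'I_m -> nat) i :
  (forall j, e j = e1 j * e2 j)%N ->
  nth 1%N [seq (e j ^ gam j)%N | j <- enum 'I_m] i =
  (nth 1%N [seq (e1 j ^ gam j)%N | j <- enum 'I_m] i * nth 1%N [seq (e2 j ^ gam j)%N | j <- enum 'I_m] i)%N.
Proof.
move=> He; case: (ltnP i m) => hi.
  have hs : (i < size (enum 'I_m))%N by rewrite size_enum_ord.
  by rewrite !(nth_map (Ordinal hi) _ _ hs) He expnMn.
have hs : (size (enum 'I_m) <= i)%N by rewrite size_enum_ord.
by rewrite !nth_default // size_map.
Qed.

Lemma nth_dvd m (gam : 'I_m -> nat) (e : 'I_m -> nat) i A :
  (forall j, e j ^ gam j %| A)%N ->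
  (nth 1%N [seq (e j ^ gam j)%N | j <- enum 'I_m] i %| A)%N.
Proof.
move=> He; case: (ltnP i m) => hi.
  have hs : (i < size (enum 'I_m))%N by rewrite size_enum_ord.
  by rewrite !(nth_map (Ordinal hi) _ _ hs).
have hs : (size (enum 'I_m) <= i)%N by rewrite size_enum_ord.
by rewrite !nth_default // size_map.
Qed.

Theorem proposition2p6 (R : realType) (m : nat) (gam : 'I_m -> nat)
  (f : 'I_m.+1 -> nat -> R[i]) :
  (1 <= m)%N ->
  (forall j, 0 < gam j)%N ->
  (forall k, multiplicative_fun (f k)) ->
  multiplicative_k (mramanujan gam f).
Proof.
move=> m1 gpos fm a b apos bpos cop.
have cab : forall i j, coprime (a i) (b j).
  move=> i j; apply: (coprime_dvdl (n := (\prod_i a i)%N)); first by rewrite (bigD1 i) //= dvdn_mulr.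
  rewrite coprime_sym; apply: (coprime_dvdl (n:= (\prod_i b i)%N)); first by rewrite (bigD1 j) //= dvdn_mulr.
  by rewrite coprime_sym.
rewrite /mramanujan big_distrlr /= pair_big_dep /=.
pose h := fun p : {ffun 'I_m -> 'I_(a ord0).+1} * {ffun 'I_m -> 'I_(b ord0).+1} =>
   [ffun j => (inord (p.1 j * p.2 j) : 'I_(a ord0 * b ord0).+1)].
pose h' := fun d : {ffun 'I_m -> 'I_(a ord0 * b ord0).+1} =>
   ([ffun j => (inord (gcdn (d j) (a ord0)) : 'I_(a ord0).+1)],
    [ffun j => (inord (gcdn (d j) (b ord0)) : 'I_(b ord0).+1)]).
have A0 := apos ord0; have B0 := bpos ord0.
have hv : forall x y j, (h (x,y) j : nat) = (x j * y j)%N.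
  move=> x y j; rewrite /h ffunE inordK // ltnS.
  by apply: leq_mul; rewrite -ltnS ltn_ord.
have peq : forall (x : {ffun 'I_m -> 'I_(a ord0).+1}) (y : {ffun 'I_m -> 'I_(b ord0).+1}),
  [forall j, (0 < h (x, y) j)%N &&
     (h (x, y) j ^ gam j %| \big[gcdn/0]_(i < m.+1 | i <= j.+1) (a i * b i))%N] &&
  (h' (h (x, y)) == (x, y)) =
  [forall j, (0 < x j)%N && (x j ^ gam j %| \big[gcdn/0]_(i < m.+1 | i <= j.+1) a i)%N] &&
  [forall j, (0 < y j)%N && (y j ^ gam j %| \big[gcdn/0]_(i < m.+1 | i <= j.+1) b i)%N].
  move=> x y; apply/idP/idP.
    case/andP => /forallP Hn /eqP He.
    have xA : forall j, (x j %| a ord0)%N.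
      move=> j; have := congr1 (fun p : {ffun 'I_m -> 'I_(a ord0).+1} * {ffun 'I_m -> 'I_(b ord0).+1} => (p.1 j : nat)) He.
      rewrite /h' /= ffunE hv inordK; last by rewrite ltnS dvdn_leq ?dvdn_gcdr.
      by move=> <-; rewrite dvdn_gcdr.
    have yB : forall j, (y j %| b ord0)%N.
      move=> j; have := congr1 (fun p : {ffun 'I_m -> 'I_(a ord0).+1} * {ffun 'I_m -> 'I_(b ord0).+1} => (p.2 j : nat)) He.
      rewrite /h' /= ffunE hv inordK; last by rewrite ltnS dvdn_leq ?dvdn_gcdr.
      by move=> <-; rewrite dvdn_gcdr.
    apply/andP; split; apply/forallP => j; have /andP [p0 /dvdn_biggcdP dv] := Hn j;
      rewrite hv in p0 dv; apply/andP; split.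
    - by move: p0; rewrite muln_gt0 => /andP [].
    - apply/dvdn_biggcdP => i hi; have := dv i hi; rewrite expnMn => dd.
      have c : coprime (x j ^ gam j) (b i) by rewrite coprimeXl // (coprime_dvdl (xA j)) // cab.
      rewrite -(Gauss_dvdl _ c); exact: dvdn_trans (dvdn_mulr _ (dvdnn _)) dd.
    - by move: p0; rewrite muln_gt0 => /andP [].
    - apply/dvdn_biggcdP => i hi; have := dv i hi; rewrite expnMn => dd.
      have c : coprime (y j ^ gam j) (a i).
        by rewrite coprimeXl // (coprime_dvdl (yB j)) // coprime_sym cab.
      rewrite -(Gauss_dvdr _ c); exact: dvdn_trans (dvdn_mull _ (dvdnn _)) dd.
  case/andP => /forallP Hx /forallP Hy.
  have xA : forall j, (x j %| a ord0)%N.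
    move=> j; have /andP [_ /dvdn_biggcdP dx] := Hx j.
    apply: dvdn_trans (dx ord0 isT); exact: dvdn_exp (gpos j) (dvdnn _).
  have yB : forall j, (y j %| b ord0)%N.
    move=> j; have /andP [_ /dvdn_biggcdP dy] := Hy j.
    apply: dvdn_trans (dy ord0 isT); exact: dvdn_exp (gpos j) (dvdnn _).
  apply/andP; split.
    apply/forallP => j; rewrite hv.
    have /andP [x0 /dvdn_biggcdP dx] := Hx j; have /andP [y0 /dvdn_biggcdP dy] := Hy j.
    rewrite muln_gt0 x0 y0 /=; apply/dvdn_biggcdP => i hi.
    by rewrite expnMn dvdn_mul ?dx ?dy.
  apply/eqP; rewrite /h'; congr pair; apply/ffunP => j; apply: val_inj; rewrite ffunE /= hv.
    by rewrite (@L1 _ _ _ _ (xA j) (yB j) (cab ord0 ord0)) inordK // ltnS leq_ord.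
  have cBA : coprime (b ord0) (a ord0) by rewrite coprime_sym (cab ord0 ord0).
  by rewrite mulnC (@L1 _ _ _ _ (yB j) (xA j) cBA) inordK // ltnS leq_ord.
rewrite (reindex_onto h h').
  apply: eq_big => [[x y]|[x y]]; first exact: peq.
  rewrite peq => /andP [/forallP Hx /forallP Hy].
  have xA : forall j, (x j ^ gam j %| a ord0)%N.
    by move=> j; have /andP [_ /dvdn_biggcdP dx] := Hx j; apply: dx.
  have yB : forall j, (y j ^ gam j %| b ord0)%N.
    by move=> j; have /andP [_ /dvdn_biggcdP dy] := Hy j; apply: dy.
  apply: (@term_mul _ _ _ (fun k => if k == 0%N then (a ord0 * b ord0)%N
       else nth 1%N [seq ((h (x,y) j : nat) ^ gam j)%N | j <- enum 'I_m] k.-1)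
     (fun k => if k == 0%N then a ord0
       else nth 1%N [seq ((x j : nat) ^ gam j)%N | j <- enum 'I_m] k.-1)
     (fun k => if k == 0%N then b ord0
       else nth 1%N [seq ((y j : nat) ^ gam j)%N | j <- enum 'I_m] k.-1) (a ord0) (b ord0) fm A0 B0 (cab ord0 ord0)).
  - by case=> [|k] //=; apply: nth_mapmul => j; rewrite hv.
  - by case=> [|k] //=; apply: nth_dvd.
  - by case=> [|k] //=; apply: nth_dvd.
move=> d /forallP Hd.
apply/ffunP => j; apply: val_inj; rewrite /h /h' !ffunE /=.
have /andP [dj0 /dvdn_biggcdP dj] := Hd j.
have djAB : (d j %| a ord0 * b ord0)%N.
  apply: dvdn_trans (dj ord0 isT); exact: dvdn_exp (gpos j) (dvdnn _).
have g1 : (gcdn (d j) (a ord0) < (a ord0).+1)%N by rewrite ltnS dvdn_leq ?dvdn_gcdr.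
have g2 : (gcdn (d j) (b ord0) < (b ord0).+1)%N by rewrite ltnS dvdn_leq ?dvdn_gcdr.
rewrite (inordK g1) (inordK g2) L2 //.
by rewrite inordK.
Qed.
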